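(* Let $H$ be a real Hilbert space, $C\subseteq H$ nonempty, closed and convex, and $F:H\to H$ an operator such that (A1) $S_D\neq\emptyset$; (A2) $F$ is quasimonotone; (A3) $F$ is uniformly continuous on $H$. Let $\{z_n\},\{w_n\}$ be the sequences generated by Algorithm 3.1 (with $\epsilon=0$), and assume $z_n\neq w_n$ for all $n$. Then: (i) for every $x^\ell\in S_D$, $\lim_{n\to\infty}\|z_n-x^\ell\|$ exists; (ii) $\lim_{n\to\infty}\|z_n-w_n\|=0$ and $\lim_{n\to\infty}\|z_{n+1}-z_n\|=0$.
   Context: $P_C$ denotes the metric projection onto $C$. $S$ is the solution set of the variational inequality: $x\in C$ with $\langle F(x),w-x\rangle\ge 0$ for all $w\in C$. $S_D$ is the set of $z\in C$ with $\langle F(v),v-z\rangle\ge0$ for all $v\in C$. $F$ is quasimonotone if $\langle F(w),z-w\rangle>0$ implies $\langle F(z),z-w\rangle\ge0$ for all $w,z\in H$. Algorithm 3.1 (with $\epsilon=0$): fix $\mu\in(0,1)$, a sequence $\{\xi_n\}\subset[0,\infty)$ with $\sum_{n}\xi_n<\infty$, $z_1\in H$ and $\lambda_1>0$. For $n=1,2,\dots$: $w_n=P_C(z_n-\lambda_nF(z_n))$; $z_{n+1}=w_n+\lambda_n(F(z_n)-F(w_n))$; $\lambda_{n+1}=\min\{\frac{\mu\|z_n-w_n\|}{\|F(z_n)-F(w_n)\|},\lambda_n+\xi_n\}$ if $F(z_n)\neq F(w_n)$, and $\lambda_{n+1}=\lambda_n+\xi_n$ otherwise. (If $z_n=w_n$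 the algorithm would stop; here it is assumed this never happens.) *)

(* Defs.v *)
From HB Require Import structures.
From mathcomp Require Import all_boot all_order all_algebra.
From mathcomp Require Import all_classical all_reals all_analysis.
Set Implicit Arguments. Unset Strict Implicit. Unset Printing Implicit Defensive.
Import Order.TTheory GRing.Theory Num.Theory.
Import numFieldNormedType.Exports.
Local Open Scope classical_set_scope.
Local Open Scope ring_scope.

(* A real Hilbert space is modelled as a complete normed space V over R
   together with a real inner product inducing its norm. *)
Definition is_inner_product (R : realType) (V : normedModType R)
  (ip : V -> V -> R) : Prop :=
  [/\ (forall x y, ip x y = ip y x),
      (forall x y z, ip (x + y) z = ip x z + ip y z),
      (forall (a : R) x y, ip (a *: x) y = a * ip x y) &
      (forall x, ip x x = `|x| ^+ 2)].

Definition is_convex_set (R : realType) (V : normedModType R) (C : set V) : Prop :=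
  forall x y (t : R), C x -> C y -> 0 <= t <= 1 -> C (t *: x + (1 - t) *: y).

Definition is_metric_projection (R : realType) (V : normedModType R)
  (C : set V) (P : V -> V) : Prop :=
  forall x, C (P x) /\ (forall y, C y -> `|x - P x| <= `|x - y|).

Definition SD (R : realType) (V : normedModType R) (ip : V -> V -> R)
  (C : set V) (F : V -> V) : set V :=
  [set z | C z /\ forall v, C v -> 0 <= ip (F v) (v - z)].

Definition quasimonotone (R : realType) (V : normedModType R)
  (ip : V -> V -> R) (F : V -> V) : Prop :=
  forall w z, 0 < ip (F w) (z - w) -> 0 <= ip (F z) (z - w).

Definition unif_continuous_op (R : realType) (V : normedModType R) (F : V -> V) : Prop :=
  forall e : R, 0 < e -> exists2 d : R, 0 < d &
    forall x y, `|x - y| < d -> `|F x - F y| < e.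

(* Algorithm 3.1 with epsilon = 0, indexed from 0 (z 0 = z_1, lam 0 = lambda_1). *)
Definition algorithm31 (R : realType) (V : normedModType R)
  (P : V -> V) (F : V -> V) (mu : R) (xi : nat -> R)
  (z w : nat -> V) (lam : nat -> R) : Prop :=
  forall n,
    [/\ w n = P (z n - lam n *: F (z n)),
        z n.+1 = w n + lam n *: (F (z n) - F (w n)) &
        lam n.+1 = (if F (z n) != F (w n) then
                      Num.min (mu * `|z n - w n| / `|F (z n) - F (w n)|) (lam n + xi n)
                    else lam n + xi n)].

(* Main.v *)
Require Import Defs.
From HB Require Import structures.
From mathcomp Require Import all_boot all_order all_algebra.
From mathcomp Require Import all_classical all_reals all_analysis.
From mathcomp Require Import ring lra.
Import Order.TTheory GRing.Theory Num.Theory.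
Import numFieldNormedType.Exports.
Local Open Scope classical_set_scope.
Local Open Scope ring_scope.

Set Implicit Arguments. Unset Strict Implicit. Unset Printing Implicit Defensive.

Lemma real_neg (R : realType) (s K : R) : 0 <= K ->
  (forall t, 0 < t <= 1 -> 2 * s <= t * K) -> s <= 0.
Proof.
move=> K0 H; rewrite leNgt; apply/negP => s0.
have KS : 0 < K + s by lra.
set t := s / (K + s).
have ht : t * (K + s) = s by rewrite /t mulfVK // gt_eqF.
have t0 : 0 < t by rewrite /t divr_gt0.
have t1 : t <= 1 by rewrite /t ler_pdivrMr // mul1r; lra.
have := H t; rewrite t0 t1 => /(_ isT); nra.
Qed.

Lemma ip0l (R : realType) (V : normedModType R) (ip : V -> V -> R) :
  is_inner_product ip -> forall y, ip 0 y = 0.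
Proof.
case=> S D Z N y; have := D 0 0 y; rewrite addr0 => h.
lra.
Qed.

Lemma ipNl (R : realType) (V : normedModType R) (ip : V -> V -> R) :
  is_inner_product ip -> forall x y, ip (- x) y = - ip x y.
Proof.
move=> hip x y; have := ip0l hip y; case: hip => S D Z N.
rewrite -(subrr x) D; lra.
Qed.

Lemma ipBl (R : realType) (V : normedModType R) (ip : V -> V -> R) :
  is_inner_product ip -> forall x y z, ip (x - y) z = ip x z - ip y z.
Proof. move=> hip x y z; have := ipNl hip y z; case: hip => S D Z N; rewrite D; lra. Qed.

Lemma normD2 (R : realType) (V : normedModType R) (ip : V -> V -> R) :
  is_inner_product ip -> forall x y, `|x + y| ^+ 2 = `|x| ^+ 2 + 2 * ip x y + `|y| ^+ 2.
Proof.
case=> S D Z N x y; rewrite -!N D (S x (x + y)) (S y (x + y)) !D (S y x); ring.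
Qed.

Lemma ipZr (R : realType) (V : normedModType R) (ip : V -> V -> R) :
  is_inner_product ip -> forall (a : R) (x y : V), ip x (a *: y) = a * ip x y.
Proof. by case=> S D Z N a x y; rewrite S Z S. Qed.

Lemma normZ2 (R : realType) (V : normedModType R) (ip : V -> V -> R) :
  is_inner_product ip -> forall (a : R) (x : V), `|a *: x| ^+ 2 = a ^+ 2 * `|x| ^+ 2.
Proof.
move=> hip a x; have := ipZr hip; case: hip => S D Z N hZ.
by rewrite -!N Z hZ expr2 mulrA.
Qed.

Lemma proj_ip (R : realType) (V : normedModType R) (ip : V -> V -> R) C P :
  is_inner_product ip -> is_convex_set C -> is_metric_projection C P ->
  forall q y, C y -> ip (q - P q) (y - P q) <= 0.
Proof.
move=> hip cvx mp q y Cy; set p := P q; have [Cp minp] := mp q.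
apply: (@real_neg _ _ (`|y - p| ^+ 2)) => [|t /andP[t0 t1]]; first exact: sqr_ge0.
have Ct := cvx y p t Cy Cp; rewrite (ltW t0) t1 in Ct.
have := minp _ (Ct isT).
have -> : q - (t *: y + (1 - t) *: p) = (q - p) + (- t) *: (y - p).
  rewrite scalerBl scale1r scaleNr scalerBr.
  by rewrite !opprD !opprK !addrA [q - t *: y - p]addrAC.
move=> h.
have h2 : `|q - p| ^+ 2 <= `|q - p + (- t) *: (y - p)| ^+ 2.
  have := normr_ge0 (q - p); rewrite !expr2; nra.
move: h2; rewrite [X in _ <= X](normD2 hip) (normZ2 hip) (ipZr hip).
set s := ip _ _; set K := `|_| ^+ 2; set U := `|_| ^+ 2.
move=> h2; nra.
Qed.

Lemma step_ineq (R : realType) (V : normedModType R) (ip : V -> V -> R) C P F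
  (x z w z' : V) (l : R) :
  is_inner_product ip -> is_convex_set C -> is_metric_projection C P ->
  SD ip C F x -> 0 <= l ->
  w = P (z - l *: F z) -> z' = w + l *: (F z - F w) ->
  `|z' - x| ^+ 2 <= `|z - x| ^+ 2 - `|z - w| ^+ 2 + (l * `|F z - F w|) ^+ 2.
Proof.
move=> hip cvx mp [Cx SDx] l0 hw hz'.
have Cw : C w by rewrite hw; case: (mp (z - l *: F z)).
have hpr := proj_ip hip cvx mp (z - l *: F z) Cx; rewrite -hw in hpr.
have hsd := SDx w Cw.
have e1 : z - x = (z - w) + (w - x) by rewrite addrA subrK.
have e2 : z' - x = (w - x) + l *: (F z - F w) by rewrite hz' addrAC.
have e3 : z - l *: F z - w = (z - w) - l *: F z by rewrite addrAC.
have e4 : x - w = - (w - x) by rewrite opprB.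
rewrite e3 e4 in hpr.
have hS : forall a b, ip a b = ip b a by case: hip.
have hZl : forall (a : R) b c, ip (a *: b) c = a * ip b c by case: hip.
have hpr' : - ip (z - w) (w - x) + l * ip (F z) (w - x) <= 0.
  move: hpr; rewrite (hS _ (- _)) (ipNl hip) (hS (w - x)) (ipBl hip) hZl; lra.
have hG : ip (w - x) (l *: (F z - F w)) = l * (ip (F z) (w - x) - ip (F w) (w - x)).
  by rewrite (ipZr hip) hS (ipBl hip).
rewrite e1 e2 (normD2 hip (z - w)) (normD2 hip (w - x)) hG (normZ2 hip) exprMn.
nra.
Qed.

Lemma uc_lin (R : realType) (V : normedModType R) (F : V -> V) :
  unif_continuous_op F -> exists A B : R, [/\ 0 <= A, 0 <= B &
    forall x y, `|F x - F y| <= A + B * `|x - y|].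
Proof.
move=> H; have [d d0 hd] := H 1 ltr01.
have ind : forall N x y, `|x - y| < N.+1%:R * d -> `|F x - F y| < N.+1%:R.
  elim=> [|N IH] x y hxy; first by apply: hd; rewrite mul1r in hxy.
  set n1 : R := N.+1%:R.
  have n2E : N.+2%:R = n1 + 1 :> R by rewrite /n1 -natr1.
  have n10 : 0 < n1 by rewrite /n1 ltr0n.
  set r := n1 / (n1 + 1).
  have hr : r * (n1 + 1) = n1 by rewrite /r mulfVK // gt_eqF // ltr_wpDr.
  have r0 : 0 <= r by rewrite /r divr_ge0 // ?ltW // ltr_wpDr // ltW.
  have r1 : 0 <= 1 - r by nra.
  set m := y + r *: (x - y).
  have hm1 : `|m - y| = r * `|x - y|.
    by rewrite /m addrAC subrr add0r normrZ ger0_norm.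
  have hm2 : `|x - m| = (1 - r) * `|x - y|.
    rewrite /m opprD addrA -[x - y - _]/(x - y + - (r *: (x - y))).
    by rewrite -[x - y in X in X + _]scale1r -scaleNr -scalerDl normrZ ger0_norm.
  rewrite n2E in hxy *.
  have ndx := normr_ge0 (x - y).
  have h1 : `|F x - F m| < 1 by apply: hd; rewrite hm2; nra.
  have h2 : `|F m - F y| < n1 by apply: IH; rewrite hm1; nra.
  have := ler_distD (F m) (F x) (F y); lra.
exists 1, d^-1; split => //; first by rewrite invr_ge0 ltW.
move=> x y; set N := Num.truncn (`|x - y| / d).
have hN : `|x - y| / d < N.+1%:R by apply: truncnS_gt.
have hN2 : N%:R <= `|x - y| / d by rewrite truncn_le divr_ge0 // ltW.
have := ind N x y; rewrite -ltr_pdivrMr // => /(_ hN) h.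
rewrite -natr1 in h; rewrite mulrC; lra.
Qed.

Lemma series0' (R : realType) (u : R ^nat) : series u 0 = 0.
Proof. by rewrite /series /= big_geq. Qed.

Lemma psum_nd (R : realType) (u : R ^nat) : (forall n, 0 <= u n) ->
  nondecreasing_seq (series u).
Proof. by move=> u0; apply/nondecreasing_seqP => n; rewrite seriesSr lerDl. Qed.

Lemma L_sum0 (R : realType) (u : R ^nat) (M : R) : (forall n, 0 <= u n) ->
  (forall n, series u n <= M) -> u @ \oo --> 0.
Proof.
move=> u0 uM; apply: cvg_series_cvg_0; apply: nondecreasing_is_cvgn.
  exact: psum_nd.
by exists M => _ [n _ <-].
Qed.

Lemma L1 (R : realType) (a g b : R ^nat) (M : R) :
  (forall n, 0 <= a n) -> (forall n, 0 <= g n) -> (forall n, 0 <= b n) ->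
  (forall n, series b n <= M) ->
  (forall n, a n.+1 + g n <= a n + b n) ->
  cvgn a /\ g @ \oo --> 0.
Proof.
move=> a0 g0 b0 bM hs.
have hg : forall n, series g n + a n <= a 0%N + series b n.
  elim=> [|n IH]; first by rewrite !series0'; lra.
  by rewrite !seriesSr; have := hs n; lra.
split; last first.
  apply: (@L_sum0 _ _ (a 0%N + M)) => // n.
  by have := hg n; have := bM n; have := a0 n; lra.
have cb : cvgn (series b).
  by apply: nondecreasing_is_cvgn; [exact: psum_nd | exists M => _ [n _ <-]].
have cc : cvgn (fun n => a n - series b n).
  apply: nonincreasing_is_cvgn.
    apply/nonincreasing_seqP => n; rewrite seriesSr; have := hs n; have := g0 n; lra.
  by exists (- M) => _ [n _ <-]; have := bM n; have := a0 n; lra.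
have -> : a = (fun n => a n - series b n) + series b.
  by apply/funext => n /=; rewrite subrK.
exact: is_cvgD.
Qed.

Lemma real_sq (R : realType) (m A : R) : 0 <= m < 1 -> 0 <= A ->
  exists c K : R, [/\ 0 < c, 0 <= K & forall d s y, 0 <= d -> 0 <= s ->
    0 <= y <= m * d + A * s -> y ^+ 2 <= (1 - c) * d ^+ 2 + K * s ^+ 2].
Proof.
move=> /andP[m0 m1] A0.
set c := (1 - m ^+ 2) / 2.
have c0 : 0 < c by rewrite /c divr_gt0 // subr_gt0 expr2; nra.
set q := m ^+ 2 * A ^+ 2 / c.
have hq : q * c = m ^+ 2 * A ^+ 2 by rewrite /q mulfVK // gt_eqF.
have q0 : 0 <= q by apply: divr_ge0; [apply: mulr_ge0; exact: sqr_ge0 | exact: ltW].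
exists c, (A ^+ 2 + q); split => //; first by have := sqr_ge0 A; lra.
move=> d s y d0 s0 /andP[y0 hy].
have h1 : y ^+ 2 <= (m * d + A * s) ^+ 2 by rewrite !expr2; nra.
have h2 : 2 * m * d * A * s <= c * d ^+ 2 + q * s ^+ 2.
  have h3 : 0 <= (c * d - m * A * s) ^+ 2 by exact: sqr_ge0.
  have h4 : c * (c * d ^+ 2 + q * s ^+ 2 - 2 * m * d * A * s) >= 0.
    have -> : c * (c * d ^+ 2 + q * s ^+ 2 - 2 * m * d * A * s) = (c * d - m * A * s) ^+ 2.
      transitivity (c ^+ 2 * d ^+ 2 + (q * c) * s ^+ 2 - 2 * c * m * d * A * s); first by ring.
      by rewrite hq; ring.
    exact: h3.
  have := pmulr_rge0 (c * d ^+ 2 + q * s ^+ 2 - 2 * m * d * A * s) c0; rewrite h4 => /esym.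
  rewrite subr_ge0 => ->; done.
have hc : 1 - c = m ^+ 2 + c by rewrite /c; field.
rewrite hc; move: h1 h2; rewrite !expr2; nra.
Qed.

Lemma series_ge0 (R : realType) (u : R ^nat) : (forall n, 0 <= u n) ->
  forall n, 0 <= series u n.
Proof.
move=> u0 n; rewrite -(series0' u); apply: (psum_nd u0); exact: leq0n.
Qed.

Lemma series_shift (R : realType) (u : R ^nat) N n : (forall k, 0 <= u k) ->
  series (fun k => u (k + N)%N) n <= series u (n + N)%N.
Proof.
move=> u0; rewrite series_addn.
have -> : \sum_(N <= k < n + N) u k = series (fun k => u (k + N)%N) n.
  by rewrite -{1}(add0n N) big_addn addnK.
have := series_ge0 u0 N; lra.
Qed.

Lemma sq_cvg0 (R : realType) (u : R ^nat) : (forall n, 0 <= u n) ->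
  (fun n => u n ^+ 2) @ \oo --> 0 -> u @ \oo --> 0.
Proof.
move=> u0 /cvgr0Pnorm_lt h; apply/cvgr0Pnorm_lt => e e0.
have := h (e ^+ 2) (exprn_gt0 _ e0); apply: filterS => n.
rewrite !ger0_norm ?sqr_ge0 ?u0 //.
have := u0 n; rewrite !expr2 => ?; nra.
Qed.

Lemma seriesZ' (R : realType) (u : R ^nat) (k : R) n :
  series (fun i => k * u i) n = k * series u n.
Proof. by rewrite /series /= big_distrr. Qed.

Lemma cvgn_shift (R : realType) (u : R ^nat) N :
  cvgn (fun n => u (n + N)%N) -> cvgn u.
Proof. by case/cvg_ex => /= l; rewrite (@cvg_shiftn N _ u) => ul; apply/cvg_ex; exists l. Qed.

Lemma cvg_shift0 (R : realType) (u : R ^nat) N :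
  (fun n => u (n + N)%N) @ \oo --> 0 -> u @ \oo --> 0.
Proof. by rewrite (@cvg_shiftn N _ u). Qed.

Unset Implicit Arguments.

Theorem lemma4p2 (R : realType) (V : completeNormedModType R)
  (ip : V -> V -> R) (C : set V) (P : V -> V) (F : V -> V)
  (mu : R) (xi : nat -> R) (z w : nat -> V) (lam : nat -> R) :
  is_inner_product ip ->
  C !=set0 -> closed C -> is_convex_set C ->
  is_metric_projection C P ->
  SD ip C F !=set0 ->
  quasimonotone ip F ->
  unif_continuous_op F ->
  0 < mu < 1 ->
  (forall n, 0 <= xi n) -> cvgn (series xi) ->
  0 < lam 0 ->
  algorithm31 P F mu xi z w lam ->
  (forall n, z n != w n) ->
  (forall x, SD ip C F x -> cvgn (fun n => `|z n - x|)) /\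
  ((fun n => `|z n - w n|) @ \oo --> (0 : R)) /\
  ((fun n => `|z n.+1 - z n|) @ \oo --> (0 : R)).
Proof.
move=> hip _ _ cvx mp [x0 Sx0] _ huc /andP[mu0 mu1] xi0 cxi lam00 alg zw.
set d := fun n => `|z n - w n|.
set e := fun n => `|F (z n) - F (w n)|.
have d0 : forall n, 0 < d n by move=> n; rewrite /d normr_gt0 subr_eq0.
have e0 : forall n, 0 <= e n by move=> n; exact: normr_ge0.
have lam0 : forall n, 0 < lam n.
  elim=> // n IH; have [_ _ ->] := alg n.
  case: ifP => hF; last by have := xi0 n; lra.
  rewrite lt_min; apply/andP; split; last by have := xi0 n; lra.
  by apply: divr_gt0; [apply: mulr_gt0 => //; exact: d0 | rewrite normr_gt0 subr_eq0].
have F1 : forall n, lam n.+1 * e n <= mu * d n.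
  move=> n; have [_ _ ->] := alg n; case: ifP => hF.
    have ep : 0 < e n by rewrite /e normr_gt0 subr_eq0.
    rewrite -ler_pdivlMr // ge_min; apply/orP; left; done.
  move/negbFE/eqP: hF => hF; rewrite /e hF subrr normr0 mulr0.
  by apply: mulr_ge0; [exact: ltW | exact: ltW].
have F2 : forall n, lam n.+1 <= lam n + xi n.
  move=> n; have [_ _ ->] := alg n; case: ifP => _ //.
  by rewrite ge_min lexx orbT.
set dl := fun n => Num.max 0 (lam n - lam n.+1).
have dl0 : forall n, 0 <= dl n by move=> n; rewrite /dl le_max lexx.
have dl1 : forall n, lam n <= lam n.+1 + dl n.
  move=> n; have : lam n - lam n.+1 <= dl n by rewrite /dl le_max lexx orbT.
  lra.
set Xs := limn (series xi).
have hXs : forall n, series xi n <= Xs.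
  by apply: nondecreasing_cvgn_le => //; exact: psum_nd.
have hdl : forall n, series dl n + lam n <= lam 0%N + series xi n.
  elim=> [|n IH]; first by rewrite !series0'; lra.
  rewrite !seriesSr.
  have : dl n <= lam n + xi n - lam n.+1.
    by rewrite /dl ge_max; apply/andP; split; have := F2 n; have := xi0 n; lra.
  lra.
set Md := lam 0%N + Xs.
have dlM : forall n, series dl n <= Md.
  by move=> n; have := hdl n; have := hXs n; have := lam0 n; rewrite /Md; lra.
have dlM' : forall n, dl n <= Md.
  move=> n; have := dlM n.+1; rewrite seriesSr; have := series_ge0 dl0 n; lra.
have dlc : dl @ \oo --> 0 := L_sum0 dl0 dlM.
have [A [B [A0 B0 hAB]]] := uc_lin huc.
have le1 : forall n, lam n * e n <= mu * d n + dl n * (A + B * d n).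
  move=> n; have := F1 n; have := dl1 n; have := hAB (z n) (w n); rewrite -/(e n) -/(d n).
  have := e0 n; have := dl0 n; nra.
set eta0 := (1 - mu) / (2 * (B + 1)).
have eta00 : 0 < eta0 by rewrite /eta0 divr_gt0 //; lra.
have heta : eta0 * (B + 1) = (1 - mu) / 2.
  by rewrite /eta0; field; apply/eqP; lra.
have [N0 _ hN0] : \forall n \near \oo, `|dl n| < eta0.
  by move/cvgr0Pnorm_lt: dlc; apply.
set m := (1 + mu) / 2.
have le2 : forall n, (N0 <= n)%N -> lam n * e n <= m * d n + A * dl n.
  move=> n hn; have := hN0 n hn; rewrite /= ger0_norm // => h.
  have hb : dl n * B <= (1 - mu) / 2 by rewrite -heta; have := dl0 n; nra.
  have hb2 : dl n * B * d n <= (1 - mu) / 2 * d n.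
    by apply: ler_wpM2r => //; apply: ltW.
  have := le1 n; rewrite /m; lra.
have [c [K [c0 K0 hcK]]] := @real_sq R m A ltac:(apply/andP; rewrite /m; split; lra) A0.
have le3 : forall n, (N0 <= n)%N -> (lam n * e n) ^+ 2 <= (1 - c) * d n ^+ 2 + K * dl n ^+ 2.
  move=> n hn; apply: hcK; [exact: ltW | exact: dl0 | ].
  by rewrite le2 // andbT mulr_ge0 // ltW.
have key : forall x, SD ip C F x ->
    cvgn (fun n => `|z n - x| ^+ 2) /\ (fun n => d n ^+ 2) @ \oo --> 0.
  move=> x Sx.
  have st : forall n, (N0 <= n)%N ->
      `|z n.+1 - x| ^+ 2 + c * d n ^+ 2 <= `|z n - x| ^+ 2 + K * Md * dl n.
    move=> n hn; have [hw hz _] := alg n.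
    have := step_ineq hip cvx mp Sx (ltW (lam0 n)) hw hz.
    rewrite -/(d n) -/(e n) => h.
    have := le3 n hn; have := dlM' n; have := dl0 n => ? ? ?.
    have : dl n ^+ 2 <= Md * dl n by rewrite expr2; nra.
    move=> ?; nra.
  have := @L1 R (fun k => `|z (k + N0)%N - x| ^+ 2) (fun k => c * d (k + N0)%N ^+ 2)
    (fun k => K * Md * dl (k + N0)%N) (K * Md * Md).
  case.
  - by move=> n; exact: sqr_ge0.
  - by move=> n; apply: mulr_ge0; [exact: ltW | exact: sqr_ge0].
  - move=> n; apply: mulr_ge0 => //; apply: mulr_ge0 => //.
    by have := dlM' 0%N; have := dl0 0%N; lra.
  - move=> n; rewrite seriesZ' ler_wpM2l //.
      by apply: mulr_ge0 => //; have := dlM' 0%N; have := dl0 0%N; lra.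
    exact: le_trans (@series_shift _ dl N0 n dl0) (dlM _).
  - by move=> n /=; rewrite addSn; apply: st; exact: leq_addl.
  move=> ca cg; split; first exact: cvgn_shift ca.
  apply: (cvg_shift0 (N := N0)).
  have := cvgMl_tmp (a := c ^-1) cg; rewrite mulr0.
  have -> : (fun k => c^-1 * (c * d (k + N0)%N ^+ 2)) = (fun k => d (k + N0)%N ^+ 2).
    by apply/funext => k; rewrite mulrA mulVf ?mul1r // gt_eqF.
  by apply; exact: nbhs_filter.
have hdc : d @ \oo --> 0.
  apply: sq_cvg0; [by move=> n; exact: ltW | exact: (key x0 Sx0).2].
split.
  move=> x Sx; have [ca _] := key x Sx.
  case/cvg_ex: ca => l hl; apply/cvg_ex; exists (Num.sqrt l).
  have hs : {for l, continuous (@Num.sqrt R)} by exact: sqrt_continuous.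
  have := @continuous_cvg _ _ _ _ _ _ _ _ hs hl.
  have -> : (Num.sqrt \o (fun n => `|z n - x| ^+ 2)) = (fun n => `|z n - x|).
    by apply/funext => n /=; rewrite sqrtr_sqr normr_id.
  by apply; exact: nbhs_filter.
split; first exact: hdc.
apply: (@squeeze_cvgr _ _ _ _ (fun=> 0) (fun n => (1 + m) * d n + A * dl n)).
- exists N0 => // n /= hn; rewrite normr_ge0 /=.
  have [_ hz _] := alg n.
  have -> : z n.+1 - z n = (w n - z n) + lam n *: (F (z n) - F (w n)) by rewrite hz addrAC.
  apply: le_trans (ler_normD _ _) _.
  rewrite normrZ gtr0_norm // distrC -/(d n) -/(e n).
  have := le2 n hn; lra.
- exact: cvg_cst.
- have := cvgD (cvgMl_tmp (a := 1 + m) hdc) (cvgMl_tmp (a := A) dlc).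
  by rewrite !mulr0 addr0; apply; exact: nbhs_filter.
Qed.
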